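(* Let $M$ be a simple-$\mathcal F$-torsion-free $R$-module. Then: (a) $M$ is a prime module; (b) $M$ is uniform; (c) $\mathrm{Ann}_R(M)\in\mathcal F^*$.
   Context: Throughout, $R$ is a commutative Noetherian local ring with maximal ideal $\mathfrak m$, and $\mathcal F$ is a Gabriel topology on $R$: a nonempty set of ideals of $R$ such that (1) if $\mathfrak a\in\mathcal F$ and $\mathfrak a\subseteq\mathfrak b$ then $\mathfrak b\in\mathcal F$; (2) if $\mathfrak a,\mathfrak b\in\mathcal F$ then $\mathfrak a\cap\mathfrak b\in\mathcal F$; (3) if $\mathfrak b$ is an ideal and there is $\mathfrak a\in\mathcal F$ with $(\mathfrak b:r)\in\mathcal F$ for all $r\in\mathfrak a$, then $\mathfrak b\in\mathcal F$. For an $R$-module $X$ and an ideal $\mathfrak a$ put $X[\mathfrak a]=\{x\in X:\mathfrak a x=0\}$. $X$ is $\mathcal F$-torsion-free if $X[\mathfrak a]=0$ for all $\mathfrak a\in\mathcal F$ (equivalently $\mathrm{Ass}(X)\cap\mathcal F=\emptyset$). $M$ is simple-$\mathcal F$-torsion-free if $M\neq 0$, $M$ is $\mathcal F$-torsion-free, and for every submodule $0\neq U\subsetneq M$ the module $M/U$ is not $\mathcal F$-torsion-free. $\mathcal F^*$ denotes the set of maximal elements (under inclusion) of $\mathrm{Spec}(R)\setminus\mathcal F$. A module $M\ne 0$ is prime if every $r\in R$ acts on $M$ either as zero or injectively (equivalently, $\mathrm{Ann}_R(M)=\mathrm{Ann}_R(U)$ for all nonzero submodules $U$). A module is uniform if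 it is nonzero and any two nonzero submodules intersect nontrivially. *)

(* Defs.v *)
From HB Require Import structures.
From mathcomp Require Import all_boot all_order all_algebra.
Set Implicit Arguments. Unset Strict Implicit. Unset Printing Implicit Defensive.
Import GRing.Theory.
Local Open Scope ring_scope.

Definition is_ideal (R : comNzRingType) (a : R -> Prop) : Prop :=
  [/\ a 0, (forall x y, a x -> a y -> a (x + y)) &
      (forall r x, a x -> a (r * x))].

Definition sub_pred (T : Type) (a b : T -> Prop) : Prop := forall x, a x -> b x.

Definition is_prime_ideal (R : comNzRingType) (p : R -> Prop) : Prop :=
  [/\ is_ideal p, ~ p 1 & (forall x y, p (x * y) -> p x \/ p y)].

Definition is_maximal_ideal (R : comNzRingType) (m : R -> Prop) : Prop :=
  [/\ is_ideal m, ~ m 1 &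
      (forall b, is_ideal b -> sub_pred m b -> ~ b 1 -> sub_pred b m)].

Definition local_ring (R : comNzRingType) : Prop :=
  exists m : R -> Prop, is_maximal_ideal m /\
    forall n, is_maximal_ideal n -> forall x, n x <-> m x.

Definition noetherian_ring (R : comNzRingType) : Prop :=
  forall I : nat -> (R -> Prop),
    (forall n, is_ideal (I n)) -> (forall n, sub_pred (I n) (I n.+1)) ->
    exists n, forall k, (n <= k)%N -> forall x, I k x <-> I n x.

Definition colon (R : comNzRingType) (b : R -> Prop) (r : R) : R -> Prop :=
  fun s => b (s * r).

Definition gabriel_topology (R : comNzRingType) (F : (R -> Prop) -> Prop) : Prop :=
  [/\ (forall a, F a -> is_ideal a),
      (exists a, F a),
      (forall a b, F a -> is_ideal b -> sub_pred a b -> F b),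
      (forall a b, F a -> F b -> F (fun x => a x /\ b x)) &
      (forall b, is_ideal b ->
         (exists a, F a /\ forall r, a r -> F (colon b r)) -> F b)].

Definition in_Fstar (R : comNzRingType) (F : (R -> Prop) -> Prop) (p : R -> Prop) : Prop :=
  [/\ is_prime_ideal p, ~ F p &
      (forall q, is_prime_ideal q -> ~ F q -> sub_pred p q -> sub_pred q p)].

Definition is_submodule (R : comNzRingType) (M : lmodType R) (U : M -> Prop) : Prop :=
  [/\ U 0, (forall x y, U x -> U y -> U (x + y)) &
      (forall (r : R) x, U x -> U (r *: x))].

Definition ann (R : comNzRingType) (M : lmodType R) : R -> Prop :=
  fun r => forall x : M, r *: x = 0.

Definition F_torsion_free (R : comNzRingType) (F : (R -> Prop) -> Prop)
    (M : lmodType R) : Prop :=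
  forall a, F a -> forall x : M, (forall r, a r -> r *: x = 0) -> x = 0.

(* The quotient M/U is F-torsion-free, written out on representatives:
   x + U lies in (M/U)[a] iff a x \subseteq U, and x + U = 0 iff x \in U. *)
Definition quotient_F_torsion_free (R : comNzRingType) (F : (R -> Prop) -> Prop)
    (M : lmodType R) (U : M -> Prop) : Prop :=
  forall a, F a -> forall x : M, (forall r, a r -> U (r *: x)) -> U x.

Definition simple_F_torsion_free (R : comNzRingType) (F : (R -> Prop) -> Prop)
    (M : lmodType R) : Prop :=
  [/\ exists x : M, x <> 0,
      F_torsion_free F M &
      forall U : M -> Prop, is_submodule U ->
        (exists x, U x /\ x <> 0) -> (exists y, ~ U y) ->
        ~ quotient_F_torsion_free F U].

Definition prime_module (R : comNzRingType) (M : lmodType R) : Prop :=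
  (exists x : M, x <> 0) /\
  forall r : R, (forall x : M, r *: x = 0) \/ (forall x : M, r *: x = 0 -> x = 0).

Definition uniform_module (R : comNzRingType) (M : lmodType R) : Prop :=
  (exists x : M, x <> 0) /\
  forall U V : M -> Prop, is_submodule U -> is_submodule V ->
    (exists x, U x /\ x <> 0) -> (exists y, V y /\ y <> 0) ->
    exists z, [/\ U z, V z & z <> 0].

(* Main.v *)
Require Import Defs.
From mathcomp Require Import all_boot all_order all_algebra.
From Stdlib Require Import Classical.
Import GRing.Theory.
Local Open Scope ring_scope.

Lemma key (R : comNzRingType) (M : lmodType R) (F : (R -> Prop) -> Prop) (U : M -> Prop) :
  simple_F_torsion_free F M -> is_submodule U -> (exists x, U x /\ x <> 0) ->
  quotient_F_torsion_free F U -> forall y, U y.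
Proof.
move=> [_ _ Hs] HU Hn Hq y; apply: NNPP => Hy.
by apply: (Hs U HU Hn _ Hq); exists y.
Qed.

Arguments key {R M F U}.

Lemma ideal_of (R : comNzRingType) (M : lmodType R) (U : M -> Prop) (x : M) :
  is_submodule U -> is_ideal (fun t : R => U (t *: x)).
Proof.
move=> [H0 HD HZ]; split.
- by rewrite scale0r.
- by move=> a b Ha Hb; rewrite scalerDl; apply: HD.
- by move=> r a Ha; rewrite -scalerA; apply: HZ.
Qed.

Arguments ideal_of {R M U}.

Lemma colon_ideal (R : comNzRingType) (b : R -> Prop) (r : R) :
  is_ideal b -> is_ideal (colon b r).
Proof.
move=> [H0 HD HZ]; rewrite /colon; split.
- by rewrite mul0r.
- by move=> a c Ha Hc; rewrite mulrDl; apply: HD.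
- by move=> s a Ha; rewrite -mulrA; apply: HZ.
Qed.

Arguments colon_ideal {R b}.

Lemma scal_comm (R : comNzRingType) (M : lmodType R) (a b : R) (x : M) :
  a *: (b *: x) = b *: (a *: x).
Proof. by rewrite !scalerA mulrC. Qed.

Arguments scal_comm {R M}.

Theorem lemma1p1 (R : comNzRingType) (M : lmodType R) (F : (R -> Prop) -> Prop) :
  noetherian_ring R -> local_ring R -> gabriel_topology F ->
  simple_F_torsion_free F M ->
  [/\ prime_module M, uniform_module M & in_Fstar F (ann M)].
Proof.
move=> _ _ HG HS.
have HS' := HS.
move: HS' => [[x0 Hx0] Htf _].
move: HG => [Hid [a0 Ha0] Hup Hcap Hcol].
have Ffull : forall b : R -> Prop, is_ideal b -> (forall t, b t) -> F b.
  by move=> b Hb Hall; apply: (Hup a0) => // t _; apply: Hall.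
have Hprime : prime_module M.
  split; first by exists x0.
  move=> r.
  pose K := fun x : M => r *: x = 0.
  have HK : is_submodule K.
    split; rewrite /K.
    - by rewrite scaler0.
    - by move=> x y Hx Hy; rewrite scalerDr Hx Hy addr0.
    - by move=> s x Hx; rewrite scal_comm Hx scaler0.
  have HqK : quotient_F_torsion_free F K.
    move=> a Fa x Hx; rewrite /K; apply: (Htf a Fa) => s Hs.
    by rewrite scal_comm; apply: Hx.
  case: (classic (exists x, K x /\ x <> 0)) => Hn.
  - left => x; exact: (key HS HK Hn HqK x).
  - right => x Hx; apply: NNPP => Hx0'; apply: Hn; by exists x.
have Hinj : forall (r : R) (x : M), x <> 0 -> r *: x = 0 -> ann M r.
  move=> r x Hx Hr; case: Hprime => _ /(_ r) [] H //.
  by exfalso; apply: Hx; apply: H.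
split => //.
- split; first by exists x0.
  move=> U V HU HV HnU [y [Vy Hy]].
  pose Ub := fun x : M => F (fun t : R => U (t *: x)).
  have HUb : is_submodule Ub.
    split; rewrite /Ub.
    - apply: Ffull; first exact: ideal_of.
      by move=> t; rewrite scaler0; case: HU.
    - move=> x z Hx Hz; apply: (Hup _ _ (Hcap _ _ Hx Hz)); first exact: ideal_of.
      by move=> t [H1 H2]; rewrite scalerDr; case: HU => _ HD _; apply: HD.
    - move=> r x Hx; apply: (Hup _ _ Hx); first exact: ideal_of.
      by move=> t Ht; rewrite scal_comm; case: HU => _ _ HZ; apply: HZ.
  have HnUb : exists x, Ub x /\ x <> 0.
    case: HnU => x [Ux Hx]; exists x; split => //; rewrite /Ub.
    apply: Ffull; first exact: ideal_of.
    by move=> t; case: HU => _ _ HZ; apply: HZ.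
  have HqUb : quotient_F_torsion_free F Ub.
    move=> a Fa x Hx; rewrite /Ub; apply: Hcol; first exact: ideal_of.
    exists a; split => // r Hr.
    apply: (Hup _ _ (Hx r Hr)); first by apply: colon_ideal; exact: ideal_of.
    by move=> t Ht; rewrite /colon -scalerA.
  have Hall := key HS HUb HnUb HqUb y.
  have : ~ (forall r, U (r *: y) -> r *: y = 0).
    by move=> H; apply: Hy; apply: (Htf _ Hall).
  move=> /not_all_ex_not [r Hr0]; move: (imply_to_and _ _ Hr0) => [Ur Hr].
  exists (r *: y); split => //.
  by case: HV => _ _ HZ; apply: HZ.
- have Hann_id : is_ideal (ann M).
    rewrite /ann; split.
    - by move=> x; rewrite scale0r.
    - by move=> a b Ha Hb x; rewrite scalerDl Ha Hb addr0.
    - by move=> r a Ha x; rewrite -scalerA Ha scaler0.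
  split.
  + split => //.
    * by move=> H; apply: Hx0; rewrite -(scale1r x0); apply: H.
    * move=> a b Hab; case: Hprime => _ /(_ b) [] Hb; first by right.
      left => x; apply: Hb; rewrite scal_comm scalerA; apply: Hab.
  + move=> Fp; apply: Hx0; apply: (Htf _ Fp) => r; apply.
  + move=> q [Hq Hq1 Hqp] Fq Hpq t Ht.
    apply: NNPP => Htp.
    have Htinj : forall x : M, t *: x = 0 -> x = 0.
      by move=> x Hx; apply: NNPP => Hx'; apply: Htp; apply: (Hinj t x).
    pose U := fun m : M => exists u, ~ q u /\ exists r, u *: m = r *: (t *: x0).
    have HU : is_submodule U.
      split; rewrite /U.
      - by exists 1; split => //; exists 0; rewrite !scaler0 scale0r.
      - move=> x y [u1 [Hu1 [r1 E1]]] [u2 [Hu2 [r2 E2]]].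
        exists (u1 * u2); split.
          by case/(Hqp _ _).
        exists (u2 * r1 + u1 * r2).
        rewrite scalerDr scalerDl -!scalerA E2 (scal_comm u1 u2 x) E1.
        done.
      - move=> c x [u [Hu [r E]]]; exists u; split => //; exists (c * r).
        by rewrite scal_comm E scalerA mulrC.
    have HnU : exists x, U x /\ x <> 0.
      exists (t *: x0); split.
        by exists 1; split => //; exists 1; rewrite !scale1r.
      by move=> H; apply: Hx0; apply: Htinj.
    have HqU : quotient_F_torsion_free F U.
      move=> a Fa x Hx.
      have : ~ (forall r, a r -> q r).
        move=> H; apply: Fq; apply: (Hup a) => //.
      move=> /not_all_ex_not [r Hr0]; move: (imply_to_and _ _ Hr0) => [ar Hr].
      case: (Hx r ar) => u [Hu [r' E]].
      exists (u * r); split; first by case/(Hqp _ _).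
      by exists r'; rewrite -scalerA.
    case: (key HS HU HnU HqU x0) => u [Hu [r E]].
    apply: Hu.
    have Hd : ann M (u - r * t).
      apply: (Hinj _ x0 Hx0); by rewrite scalerBl E scalerA subrr.
    have -> : u = (u - r * t) + r * t by rewrite subrK.
    case: Hq => _ HD HZ; apply: HD; first exact: Hpq.
    by apply: HZ.
Qed.
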